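(* The class of MPNNs can count $2$-paths at node level: for all node-graph pairs $(i_1,G_1),(i_2,G_2)$ with $C(2\text{-path},i_1,G_1)\ne C(2\text{-path},i_2,G_2)$, there exists an MPNN with $h^{(T)}_{i_1}(G_1)\ne h^{(T)}_{i_2}(G_2)$.
   Context: Graphs are finite, simple, undirected, $G=(V,E)$, possibly carrying node attributes $x_v$ and edge attributes $e_{u,v}$ (a fixed constant when absent). $N(v)$ is the neighbour set of $v$. A $2$-path is a sequence of edges $(v_1,v_2),(v_2,v_3)$ with $v_1,v_2,v_3$ pairwise distinct; two paths are identified when their edge sets coincide; $C(2\text{-path},i,G)$ is the number of inequivalent $2$-paths starting from $i$ (i.e. with $v_1=i$). A class $\mathcal F$ of functions on node-graph pairs can count $S$ at node level if for all $(i_1,G_1),(i_2,G_2)$ with $C(S,i_1,G_1)\ne C(S,i_2,G_2)$ there is $f\in\mathcal F$ with $f(i_1,G_1)\ne f(i_2,G_2)$. MPNNs. An MPNN is specified by $T$ and arbitrary functions $M_t$ (values in some $\mathbb R^{d_t}$), $U_t$, $t=0,\dots,T-1$: $h^{(0)}_i=x_i$ and $h^{(t+1)}_i=U_t\big(h^{(t)}_i,\sum_{j\in N(i)}M_t(h^{(t)}_i,h^{(t)}_j,e_{i,j})\big)$. The node-level function computed is $(i,G)\mapsto h^{(T)}_i$; the class of MPNNs consists of all such choices. *)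

(* Defs.v *)
From HB Require Import structures.
From mathcomp Require Import all_boot all_order all_algebra.
From mathcomp Require Import reals.
Set Implicit Arguments. Unset Strict Implicit. Unset Printing Implicit Defensive.
Import GRing.Theory Num.Theory.
Local Open Scope ring_scope.

Record graph (R : nzRingType) (dx de : nat) := Graph {
  gV : finType;
  gadj : rel gV;
  gadj_sym : symmetric gadj;
  gadj_irr : irreflexive gadj;
  gx : gV -> 'rV[R]_dx;
  ge : gV -> gV -> 'rV[R]_de;
  ge_sym : forall u v, ge u v = ge v u }.
Arguments gV {R dx de} G : rename.
Arguments gadj {R dx de} G _ _ : rename.
Arguments gx {R dx de} G _ : rename.
Arguments ge {R dx de} G _ _ : rename.

Definition layer_dim (dx : nat) (hdim : nat -> nat) (t : nat) : nat :=
  if t is t'.+1 then hdim t' else dx.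

Record mpnn (R : nzRingType) (dx de : nat) := MPNN {
  depth : nat;
  hdim : nat -> nat;
  mdim : nat -> nat;
  msg : forall t, 'rV[R]_(layer_dim dx hdim t) -> 'rV[R]_(layer_dim dx hdim t) ->
                  'rV[R]_de -> 'rV[R]_(mdim t);
  upd : forall t, 'rV[R]_(layer_dim dx hdim t) -> 'rV[R]_(mdim t) ->
                  'rV[R]_(layer_dim dx hdim t.+1) }.
Arguments depth {R dx de} N : rename.
Arguments hdim {R dx de} N _ : rename.
Arguments mdim {R dx de} N _ : rename.
Arguments msg {R dx de} N t _ _ _ : rename.
Arguments upd {R dx de} N t _ _ : rename.

Fixpoint hstate (R : nzRingType) (dx de : nat) (N : mpnn R dx de) (G : graph R dx de)
  (t : nat) : gV G -> 'rV[R]_(layer_dim dx (hdim N) t) :=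
  match t as t0 return gV G -> 'rV[R]_(layer_dim dx (hdim N) t0) with
  | 0 => fun i => gx G i
  | t'.+1 => fun i =>
      upd N t' (@hstate R dx de N G t' i)
        (\sum_(j | gadj G i j) msg N t' (@hstate R dx de N G t' i) (@hstate R dx de N G t' j) (ge G i j))
  end.

Arguments hstate {R dx de} N G t _.

Definition mpnn_out (R : nzRingType) (dx de : nat) (N : mpnn R dx de) (G : graph R dx de)
  (i : gV G) : 'rV[R]_(layer_dim dx (hdim N) (depth N)) :=
  @hstate R dx de N G (depth N) i.

(* 2-paths starting at i: pairs (v2, v3) giving edges (i,v2),(v2,v3),
   with i, v2, v3 pairwise distinct. *)
Definition two_paths_from (R : nzRingType) (dx de : nat) (G : graph R dx de) (i : gV G)
  : {set gV G * gV G} :=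
  [set p : gV G * gV G | [&& gadj G i p.1, gadj G p.1 p.2,
                             i != p.1, p.1 != p.2 & i != p.2]].

Definition two_path_edges (T : finType) (i : T) (p : T * T) : {set {set T}} :=
  [set [set i; p.1]; [set p.1; p.2]].

Definition count_2path (R : nzRingType) (dx de : nat) (G : graph R dx de) (i : gV G) : nat :=
  #|[set two_path_edges i p | p in two_paths_from i]|.
Arguments mpnn_out {R dx de} N G i.
Arguments two_paths_from {R dx de} G i.
Arguments count_2path {R dx de} G i.

(* Main.v *)
Require Import Defs.
From HB Require Import structures.
From mathcomp Require Import all_boot all_order all_algebra.
From mathcomp Require Import reals.
Set Implicit Arguments. Unset Strict Implicit. Unset Printing Implicit Defensive.
Import GRing.Theory Num.Theory.

Lemma edges_inj (T : finType) (i a b c d : T) :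
  i != a -> a != b -> i != b -> i != c -> c != d -> i != d ->
  [set [set i; a]; [set a; b]] = [set [set i; c]; [set c; d]] -> a = c /\ b = d.
Proof.
move=> ia ab ib ic cd id E.
have H1 : [set i; a] \in [set [set i; c]; [set c; d]] by rewrite -E set21.
rewrite in_set2 in H1.
case/orP: H1 => /eqP E1.
- have : a \in [set i; c] by rewrite -E1 set22.
  rewrite in_set2 eq_sym (negbTE ia) /= => /eqP ac; subst c.
  have H2 : [set a; b] \in [set [set i; a]; [set a; d]] by rewrite -E set22.
  rewrite in_set2 in H2; case/orP: H2 => /eqP E2.
  + have : b \in [set i; a] by rewrite -E2 set22.
    by rewrite in_set2 eq_sym (negbTE ib) eq_sym (negbTE ab).
  + have : b \in [set a; d] by rewrite -E2 set22.
    by rewrite in_set2 eq_sym (negbTE ab) /= => /eqP.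
- have : i \in [set c; d] by rewrite -E1 set21.
  by rewrite in_set2 (negbTE ic) (negbTE id).
Qed.

Section S.
Variables (R : realType) (dx de : nat).
Local Open Scope ring_scope.

Lemma count_eq (G : graph R dx de) (i : gV G) :
  count_2path G i = #|two_paths_from G i|.
Proof.
rewrite /count_2path card_in_imset // => p q.
rewrite !inE => /and5P [ip1 p12 ip1n p12n ip2n] /and5P [iq1 q12 iq1n q12n iq2n] E.
have [h1 h2] := edges_inj ip1n p12n ip2n iq1n q12n iq2n E.
by case: p q {ip1 p12 ip1n p12n ip2n iq1 q12 iq1n q12n iq2n E} h1 h2 => a b [c d] /= -> ->.
Qed.

Lemma card_paths (G : graph R dx de) (i : gV G) :
  #|two_paths_from G i| =
  (\sum_(j | gadj G i j) (#|[pred k | gadj G j k]| - 1))%N.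
Proof.
rewrite -sum1_card.
rewrite (eq_bigl (fun p : gV G * gV G =>
   [&& gadj G i p.1, gadj G p.1 p.2 & p.2 != i])); last first.
  case=> a b /=; rewrite inE /=.
  apply/and5P/and3P.
    by case=> -> -> _ _; rewrite eq_sym => ->.
  case=> ia ab bi; split=> //.
  - by apply/eqP => E; subst a; rewrite (@gadj_irr _ _ _ G i) in ia.
  - by apply/eqP => E; subst b; rewrite (@gadj_irr _ _ _ G a) in ab.
  - by rewrite eq_sym.
rewrite -(pair_big_dep xpredT (fun a b => [&& gadj G i a, gadj G a b & b != i])
            (fun _ _ => 1%N)) /=.
rewrite (bigID (fun a => gadj G i a)) /= [X in (_ + X)%N]big1 ?addn0; last first.
  by move=> a /negbTE na; rewrite big_pred0 // => b; rewrite na.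
apply: eq_bigr => a ia.
rewrite sum1_card.
rewrite (cardD1 i [pred k | gadj G a k]) inE /= (@gadj_sym _ _ _ G a i) ia add1n subSS subn0.
apply: eq_card => b; rewrite !inE /= andbC.
by [].
Qed.
End S.

Local Open Scope ring_scope.

Definition hd1 (_ : nat) : nat := 1%N.

Definition cmsg (R : realType) (dx de : nat) :
  forall t, 'rV[R]_(layer_dim dx hd1 t) -> 'rV[R]_(layer_dim dx hd1 t) ->
            'rV[R]_de -> 'rV[R]_(hd1 t) :=
  fun t => match t as t0 return
     'rV[R]_(layer_dim dx hd1 t0) -> 'rV[R]_(layer_dim dx hd1 t0) ->
            'rV[R]_de -> 'rV[R]_(hd1 t0) with
  | 0 => fun _ _ _ => const_mx 1
  | _.+1 => fun _ hj _ => hj - const_mx 1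
  end.

Definition cupd (R : realType) (dx : nat) :
  forall t, 'rV[R]_(layer_dim dx hd1 t) -> 'rV[R]_(hd1 t) ->
            'rV[R]_(layer_dim dx hd1 t.+1) :=
  fun t _ m => m.

Definition myN (R : realType) (dx de : nat) : mpnn R dx de :=
  @MPNN R dx de 2 hd1 hd1 (@cmsg R dx de) (@cupd R dx).

Lemma myN_out (R : realType) (dx de : nat) (G : graph R dx de) (i : gV G) :
  (mpnn_out (myN R dx de) G i : 'rV[R]_1) ord0 ord0 = (count_2path G i)%:R.
Proof.
rewrite count_eq card_paths /mpnn_out /= /cupd /= summxE.
rewrite (big_morph (fun n : nat => n%:R : R) (@natrD R) (mulr0n 1)).
apply: eq_bigr => j ij.
rewrite /= !mxE summxE.
rewrite (eq_bigr (fun _ => 1)); last by move=> k _; rewrite mxE.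
rewrite natrB; last first.
  by apply/card_gt0P; exists i; rewrite inE /= (@gadj_sym _ _ _ G j i).
congr (_ - _); rewrite -sum1_card.
by rewrite (big_morph (fun n : nat => n%:R : R) (@natrD R) (mulr0n 1)).
Qed.

Theorem theorem6 (R : realType) (dx de : nat)
  (G1 G2 : graph R dx de) (i1 : gV G1) (i2 : gV G2) :
  count_2path G1 i1 <> count_2path G2 i2 ->
  exists N : mpnn R dx de, mpnn_out N G1 i1 <> mpnn_out N G2 i2.
Proof.
move=> hne; exists (myN R dx de) => E.
apply: hne; apply/eqP; rewrite -(eqr_nat R) -myN_out -myN_out.
by rewrite E.
Qed.
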